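(* Let $C$ be an $(n,k)$-code and $0\le d\le k$. Then $C$ is $\operatorname{rMDS}_d(2)$ if and only if $C^\perp$ is $\operatorname{rMDS}^d(2)$.
   Context: For a $k'\times n$ matrix $V$ and $A_1,\dots,A_\ell\subseteq[n]$, $\mathcal G_{A_1,\dots,A_\ell}[V]$ is the $\ell k'\times(k'+\sum|A_i|)$ block matrix whose $i$-th block row has $I_{k'}$ in the first block column and $V|_{A_i}$ (columns of $V$ in $A_i$) in block column $i+1$. A generic matrix has independent indeterminate entries. An $(n,k')$-code with generator matrix $V$ is $\operatorname{rMDS}_d(\ell)$ ($0\le d\le k'$) if $\mathcal G_{A_1,\dots,A_\ell}[V]$ has full column rank whenever $\mathcal G_{A_1,\dots,A_\ell}[W]$ does, for $W$ a generic $(k'-d)\times n$ matrix. Sets are $V$-saturated if $\operatorname{rank}\mathcal G_{A_1,\dots,A_\ell}[V]=\ell k'$, and have the $m$-dimensional saturation property if they are $W$-saturated for a generic $m\times n$ $W$. An $(n,k')$-code with generator matrix $V$ is $\operatorname{rMDS}^d(\ell)$ ($0\le d\le n-k'$) if every family with the $(k'+d)$-dimensional saturation property is $V$-saturated. *)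

(* Defs.v *)
From HB Require Import structures.
From mathcomp Require Import all_boot all_order all_algebra.
From mathcomp Require Import mpoly fraction.
Set Implicit Arguments. Unset Strict Implicit. Unset Printing Implicit Defensive.
Import GRing.Theory.
Local Open Scope ring_scope.

Definition colrestr (R : Type) (k' n : nat) (V : 'M[R]_(k', n)) (A : {set 'I_n})
  : 'M[R]_(k', #|A|) := colsub (fun j : 'I_#|A| => enum_val j) V.

(* G_{A_1,...,A_l}[V]: block row i is  [ I_k' | 0 ... V|_{A_i} ... 0 ],
   i.e. G = [ col of l copies of I_k' | block-diagonal (V|_{A_i})_i ]. *)
Definition Gmx (R : pzRingType) (k' n l : nat) (A : 'I_l -> {set 'I_n})
  (V : 'M[R]_(k', n)) :=
  row_mx (\mxcol_(i < l) (1%:M : 'M[R]_k'))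
         (\mxblock_(i < l, j < l)
             (if i == j then colrestr V (A j) else 0 : 'M[R]_(k', #|A j|))).

Definition full_col_rank (R : fieldType) (k' n l : nat) (A : 'I_l -> {set 'I_n})
  (V : 'M[R]_(k', n)) : Prop :=
  \rank (Gmx A V) = (k' + \sum_(i < l) #|A i|)%N.

Definition saturated (R : fieldType) (k' n l : nat) (A : 'I_l -> {set 'I_n})
  (V : 'M[R]_(k', n)) : Prop :=
  \rank (Gmx A V) = (l * k')%N.

Definition genfield (F : fieldType) (m n : nat) := {fraction {mpoly F[m * n]}}.

Definition generic_mx (F : fieldType) (m n : nat) : 'M[genfield F m n]_(m, n) :=
  \matrix_(i < m, j < n) (@FracField.tofrac _ ('X_(mxvec_index i j) : {mpoly F[m * n]})).

Definition rMDS_sub (F : fieldType) (k' n : nat) (d l : nat) (V : 'M[F]_(k', n))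
  : Prop :=
  forall A : 'I_l -> {set 'I_n},
    full_col_rank A (generic_mx F (k' - d) n) -> full_col_rank A V.

Definition rMDS_sup (F : fieldType) (k' n : nat) (d l : nat) (V : 'M[F]_(k', n))
  : Prop :=
  forall A : 'I_l -> {set 'I_n},
    saturated A (generic_mx F (k' + d) n) -> saturated A V.

(* Main.v *)
Require Import Defs.
From HB Require Import structures.
From mathcomp Require Import all_boot all_order all_algebra.
From mathcomp Require Import mpoly fraction.
From mathcomp Require Import zify.
Set Implicit Arguments. Unset Strict Implicit. Unset Printing Implicit Defensive.
Import GRing.Theory.
Local Open Scope ring_scope.

Section Aux.
Variable R : fieldType.

Definition Emx n (A : {set 'I_n}) : 'M[R]_(n, #|A|) :=
  colsub (fun j : 'I_#|A| => enum_val j) 1%:M.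

Lemma EmxE n (A : {set 'I_n}) l i : Emx A l i = (l == enum_val i)%:R.
Proof. by rewrite !mxE. Qed.

Lemma colrestrE k n (M : 'M[R]_(k, n)) A : colrestr M A = M *m Emx A.
Proof. by rewrite /colrestr /Emx mulmx_colsub mulmx1. Qed.

Lemma EtE n (A : {set 'I_n}) : (Emx A)^T *m Emx A = 1%:M.
Proof.
apply/matrixP => i i'; rewrite !mxE (bigD1 (enum_val i)) //= big1.
  by rewrite !mxE eqxx mul1r addr0 (inj_eq enum_val_inj).
by move=> l /negbTE nl; rewrite !mxE nl mulr0n mul0r.
Qed.

Lemma EtE_disj n (A B : {set 'I_n}) : [disjoint A & B] -> (Emx A)^T *m Emx B = 0.
Proof.
move=> dAB; apply/matrixP => i i'; rewrite !mxE big1 // => l _.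
rewrite !mxE; case: (eqVneq l (enum_val i)) => [->|]; last by rewrite mul0r.
case: (eqVneq (enum_val i) (enum_val i')) => [e|]; last by rewrite mulr0.
have := enum_valP i; have := enum_valP i'; rewrite -e => h1 h2.
by move: dAB => /disjointFr /(_ h2); rewrite h1.
Qed.

Lemma EEt_supp n (A : {set 'I_n}) (z : 'cV[R]_n) :
  (forall j, j \notin A -> z j 0 = 0) -> Emx A *m ((Emx A)^T *m z) = z.
Proof.
move=> zA; apply/matrixP => j o; rewrite ord1.
rewrite mulmxA mxE; case: (boolP (j \in A)) => jA.
  rewrite (bigD1 j) //= big1 => [|l /negbTE lj].
    rewrite !mxE (bigD1 (enum_rank_in jA j)) //= big1 => [|i ne].
      by rewrite !mxE enum_rankK_in // eqxx !mulr1n mul1r !addr0 mul1r.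
    rewrite !mxE; case: (eqVneq j (enum_val i)) => [e|]; last by rewrite mulr0n mul0r.
    have : enum_rank_in jA j = i by apply: enum_val_inj; rewrite enum_rankK_in.
    by move=> ei; move: ne; rewrite ei eqxx.
  rewrite !mxE big1 ?mul0r // => i _; rewrite !mxE.
  case: (eqVneq j (enum_val i)) => [e|]; last by rewrite mulr0n mul0r.
  case: (eqVneq l (enum_val i)) => [e'|]; last by rewrite mulr0n mulr0.
  by move: lj; rewrite e e' eqxx.
rewrite (zA j jA) big1 // => l _; rewrite !mxE big1 ?mul0r // => i _.
rewrite !mxE; case: (eqVneq j (enum_val i)) => [e|]; last by rewrite mulr0n mul0r.
by move: jA; rewrite e enum_valP.
Qed.

Lemma ord2 (i : 'I_2) : i = ord0 \/ i = ord_max.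
Proof. by case: i => [[|[|//]] h]; [left|right]; apply: val_inj. Qed.

Lemma sum2 (V : nmodType) (F : 'I_2 -> V) : \sum_(i < 2) F i = F ord0 + F ord_max.
Proof. by rewrite big_ord_recr big_ord1 /=; congr (F _ + _); apply: val_inj. Qed.

Lemma Gmx_mulr k n (A : 'I_2 -> {set 'I_n}) (M : 'M[R]_(k, n))
  (xs : 'I_2 -> 'rV[R]_k) :
  (\mxrow_i xs i) *m Gmx A M =
  row_mx (xs ord0 + xs ord_max) (\mxrow_j (xs j *m colrestr M (A j))).
Proof.
rewrite /Gmx mul_mx_row mul_mxrow_mxcol mul_mxrow_mxblock.
congr row_mx; first by rewrite (sum2 (fun i => xs i *m 1%:M)) !mulmx1.
apply/eq_mxrowP => j.
rewrite (bigD1 j) //= eqxx big1 ?addr0 // => i /negbTE ->; exact: mulmx0.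
Qed.

Lemma Gmx_mull k n (A : 'I_2 -> {set 'I_n}) (M : 'M[R]_(k, n))
  (w : 'cV[R]_k) (us : forall j : 'I_2, 'cV[R]_#|A j|) :
  Gmx A M *m col_mx w (\mxcol_j us j) = \mxcol_i (w + colrestr M (A i) *m us i).
Proof.
rewrite /Gmx mul_row_col mxcol_mul mul_mxblock_mxrow -mxcolD.
apply/eq_mxcolP => i; rewrite mul1mx; congr (_ + _).
rewrite (bigD1 i) //= eqxx big1 ?addr0 // => j /negbTE; rewrite eq_sym => ->; exact: mul0mx.
Qed.

Lemma row_freeP' m p (B : 'M[R]_(m, p)) :
  row_free B <-> forall x : 'rV_m, x *m B = 0 -> x = 0.
Proof.
split=> [fB x /eqP|H].
  by rewrite mulmx_free_eq0 // => /eqP.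
rewrite -kermx_eq0; apply/negPn/negP => /rowV0Pn [v /sub_kermxP vK].
by rewrite (H _ vK) eqxx.
Qed.

Lemma row_fullP' m p (B : 'M[R]_(m, p)) :
  row_full B <-> forall v : 'cV_p, B *m v = 0 -> v = 0.
Proof.
have -> : row_full B = row_free B^T by rewrite /row_full /row_free mxrank_tr.
rewrite row_freeP'; split=> H v Hv.
  apply: trmx_inj; rewrite trmx0; apply: H.
  by rewrite -trmx_mul Hv trmx0.
apply: trmx_inj; rewrite trmx0; apply: H.
by rewrite -[B]trmxK -trmx_mul Hv trmx0.
Qed.

Lemma rest0 k n (M : 'M[R]_(k, n)) (B : {set 'I_n}) (x : 'rV[R]_k) :
  (forall j, j \in B -> (x *m M) 0 j = 0) -> x *m colrestr M B = 0.
Proof.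
move=> H; rewrite /colrestr mulmx_colsub; apply/matrixP => a b.
by rewrite [a]ord1 mxE (H _ (enum_valP b)) mxE.
Qed.

Lemma rest0' k n (M : 'M[R]_(k, n)) (B : {set 'I_n}) (x : 'rV[R]_k) :
  x *m colrestr M B = 0 -> forall j, j \in B -> (x *m M) 0 j = 0.
Proof.
rewrite /colrestr mulmx_colsub => /matrixP H j jB.
have := H 0 (enum_rank_in jB j); rewrite !mxE enum_rankK_in //.
Qed.

Definition spans n m (S : {set 'I_n}) (M : 'M[R]_(m, n)) :=
  forall x : 'rV_m, (forall j, j \in S -> (x *m M) 0 j = 0) -> x = 0.

Lemma sat_iff k n (A : 'I_2 -> {set 'I_n}) (M : 'M[R]_(k, n)) :
  saturated A M <-> spans (A ord0 :|: A ord_max) M.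
Proof.
have e : (\sum_(i < 2) k = 2 * k)%N by rewrite big_ord_recr big_ord1 /= mul2n addnn.
have -> : saturated A M <-> row_free (Gmx A M).
  by rewrite /saturated /row_free -e; split=> [->|/eqP].
rewrite row_freeP'; split.
  move=> HG x hx.
  pose xs (i : 'I_2) := if i == ord0 then x else - x.
  have := HG (\mxrow_i xs i); rewrite Gmx_mulr.
  have x0 : forall j, xs j *m colrestr M (A j) = 0.
    move=> j; rewrite /xs; case: (j == ord0); rewrite ?mulNmx; 
      (have -> : x *m colrestr M (A j) = 0 by apply: rest0 => l lA; apply: hx; rewrite inE;
        case: (ord2 j) lA => -> ->; rewrite ?orbT);
      rewrite ?oppr0 //.
  have -> : (\mxrow_j (xs j *m colrestr M (A j))) = \mxrow_j (0 : 'rV_#|A j|).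
    by apply/eq_mxrowP.
  rewrite mxrow0 /xs /= subrr row_mx0 => /(_ erefl).
  move/(congr1 (fun X => submxrow X ord0)); rewrite mxrowK /= => ->.
  by apply/matrixP => a b; rewrite !mxE.
move=> Hs x; rewrite -[x](@submxrowK _ _ (fun=> k)) Gmx_mulr.
set xs := submxrow x => /eqP; rewrite row_mx_eq0 => /andP[/eqP s0 /eqP].
rewrite -(@mxrow0 _ _ (fun j => #|A j|)) => /eq_mxrowP H.
have x1 : xs ord_max = - xs ord0 by apply/eqP; rewrite -addr_eq0 addrC s0.
have x0 : xs ord0 = 0.
  apply: Hs => j; rewrite inE => /orP[] jA.
    exact: rest0' (H ord0) _ jA.
  have := rest0' (H ord_max) jA; rewrite x1 mulNmx mxE => /eqP.
  by rewrite oppr_eq0 => /eqP.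
rewrite -(@mxrow0 _ _ (fun=> k)); apply/eq_mxrowP => i.
by case: (ord2 i) => ->; rewrite ?x1 x0 ?oppr0.
Qed.

Lemma fcr_iff k n (A : 'I_2 -> {set 'I_n}) (M : 'M[R]_(k, n)) :
  full_col_rank A M <->
  (forall (w : 'cV_k) (us : forall j : 'I_2, 'cV[R]_#|A j|),
     (forall i, w + colrestr M (A i) *m us i = 0) -> w = 0 /\ forall i, us i = 0).
Proof.
have -> : full_col_rank A M <-> row_full (Gmx A M).
  by rewrite /full_col_rank /row_full; split=> [->|/eqP].
rewrite row_fullP'; split.
  move=> HG w us H.
  have := HG (col_mx w (\mxcol_j us j)); rewrite Gmx_mull.
  have -> : \mxcol_i (w + colrestr M (A i) *m us i) = \mxcol_i (0 : 'cV_k).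
    by apply/eq_mxcolP.
  move=> /(_ (mxcol0 _)) /eqP; rewrite col_mx_eq0 => /andP[/eqP -> /eqP u0].
  split=> // i; have := mxcolK us i; rewrite u0 => <-.
  by apply/matrixP => a b; rewrite !mxE.
move=> Hs v; rewrite -[v]vsubmxK -[dsubmx v](@submxcolK _ _ (fun j => #|A j|)).
rewrite Gmx_mull; set us := submxcol (dsubmx v).
rewrite -(@mxcol0 _ _ (fun=> k)) => /eq_mxcolP H.
have [-> u0] := Hs _ _ H.
have -> : \mxcol_j us j = \mxcol_j (0 : 'cV_#|A j|) by apply/eq_mxcolP.
by rewrite mxcol0 col_mx0.
Qed.

End Aux.

Lemma mxvec_index_inj m n (i i' : 'I_m) (j j' : 'I_n) :
  mxvec_index i j = mxvec_index i' j' -> i = i' /\ j = j'.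
Proof. by rewrite /mxvec_index => /cast_ord_inj/enum_rank_inj [-> ->]. Qed.

Lemma generic_rank (F : fieldType) m n (T : {set 'I_n}) :
  \rank (colrestr (generic_mx F m n) T) = minn m #|T|.
Proof.
apply/eqP; rewrite eqn_leq leq_min rank_leq_row rank_leq_col /=.
set W := generic_mx F m n.
set r := minn m #|T|.
pose f : 'I_r -> 'I_m := widen_ord (geq_minl m #|T|).
pose g : 'I_r -> 'I_#|T| := widen_ord (geq_minr m #|T|).
pose Q : 'M[{mpoly F[m * n]}]_r :=
  \matrix_(a, b) 'X_(mxvec_index (f a) (enum_val (g b))).
have EP : mxsub f g (colrestr W T) = map_mx (@FracField.tofrac _) Q.
  by apply/matrixP => a b; rewrite !mxE.
pose v : 'I_(m * n) -> F := fun i =>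
  (i \in [set mxvec_index (f c) (enum_val (g c)) | c : 'I_r])%:R.
have mem a b : (mxvec_index (f a) (enum_val (g b)) \in
     [set mxvec_index (f c) (enum_val (g c)) | c : 'I_r]) = (a == b).
  apply/imsetP/eqP => [[c _ /mxvec_index_inj [e1 /enum_val_inj e2]]|->].
    have ac : a = c by apply: val_inj; move/(congr1 val): e1.
    have bc : b = c by apply: val_inj; move/(congr1 val): e2.
    by rewrite ac bc.
  by exists b.
have dQ : meval v (\det Q) = 1.
  rewrite -det_map_mx -[RHS](det1 _ r); congr (\det _).
  by apply/matrixP => a b; rewrite !mxE -[LHS]/(meval v _) mevalXU /v mem.
have rP : \rank (mxsub f g (colrestr W T)) = r.
  apply: mxrank_unit; rewrite unitmxE unitfE EP det_map_mx tofrac_eq0.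
  by apply/eqP => d0; move: dQ; rewrite d0 meval0 => /eqP; rewrite eq_sym oner_eq0.
rewrite -[X in (X <= _)%N]rP mxsubrc.
apply: leq_trans (mxrankS (rowsub_sub _ _)) _.
by rewrite -[colrestr W T]mulmx1 -mulmx_colsub mulmx1 mxrankM_maxl.
Qed.

Lemma zero_size (R : fieldType) a p (N : 'M[R]_(a, p)) (u : 'cV[R]_p) :
  p = 0%N -> N *m u = 0 /\ u = 0.
Proof. by move=> e; subst p; rewrite [N]thinmx0 mul0mx [u]flatmx0. Qed.

Lemma EtzE (R : fieldType) n (A : {set 'I_n}) (z : 'cV[R]_n) i :
  ((Emx R A)^T *m z) i 0 = z (enum_val i) 0.
Proof.
rewrite mxE (bigD1 (enum_val i)) //= big1 ?addr0; first by rewrite !mxE eqxx mul1r.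
by move=> l /negbTE nl; rewrite !mxE nl mulr0n mul0r.
Qed.

Lemma EuzE (R : fieldType) n (A : {set 'I_n}) (u : 'cV[R]_#|A|) j :
  j \notin A -> (Emx R A *m u) j 0 = 0.
Proof.
move=> jA; rewrite mxE big1 // => i _; rewrite !mxE.
case: (eqVneq j (enum_val i)) => [e|]; last by rewrite mulr0n mul0r.
by move: jA; rewrite e enum_valP.
Qed.

Lemma spans_card (R : fieldType) k n (S : {set 'I_n}) (M : 'M[R]_(k, n)) :
  spans S M -> (k <= #|S|)%N.
Proof.
move=> HS; rewrite leqNgt; apply/negP => lt.
have nf : ~~ row_free (colrestr M S).
  rewrite /row_free; apply/negP => /eqP e.
  by have := rank_leq_col (colrestr M S); rewrite e leqNgt lt.
move: nf; rewrite -kermx_eq0 => /rowV0Pn [x /sub_kermxP xK].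
by rewrite (HS x (rest0' xK)) eqxx.
Qed.

Lemma generic_spans (F : fieldType) m n (S : {set 'I_n}) :
  (m <= #|S|)%N -> spans S (generic_mx F m n).
Proof.
move=> mS x hx.
have fr : row_free (colrestr (generic_mx F m n) S).
  by rewrite /row_free generic_rank (minn_idPl mS).
by apply: (proj1 (row_freeP' _) fr); apply: rest0.
Qed.

Lemma generic_indep (F : fieldType) m n (T : {set 'I_n}) :
  (#|T| <= m)%N -> forall u : 'cV_#|T|, colrestr (generic_mx F m n) T *m u = 0 -> u = 0.
Proof.
move=> Tm; apply/row_fullP'.
by rewrite /row_full generic_rank (minn_idPr Tm).
Qed.

Lemma main_aux (F : fieldType) (n k d : nat)
  (V : 'M[F]_(k, n)) (H : 'M[F]_(n - k, n)) :
  row_free V -> row_free H -> (H == kermx V^T)%MS -> (d <= k)%N ->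
  (rMDS_sub d 2 V <-> rMDS_sup d 2 H).
Proof.
move=> fV fH eH dk.
have kn : (k <= n)%N by have := rank_leq_col V; rewrite (eqP fV).
move/andP: eH => [sHK sKH].
have kerP : forall y : 'rV_n, V *m y^T = 0 <-> exists x : 'rV_(n - k), y = x *m H.
  move=> y; split.
    move=> Vy; apply/submxP; apply: submx_trans sKH; apply/sub_kermxP.
    by rewrite -[y]trmxK -trmx_mul Vy trmx0.
  move=> [x ->]; have : (x *m H <= kermx V^T)%MS by apply: submx_trans sHK; exact: submxMl.
  by move/sub_kermxP => e; rewrite -[V]trmxK -trmx_mul e trmx0.
split.
- move=> HV A sW; apply/sat_iff => x hx.
  set S := A ord0 :|: A ord_max in hx.
  have cS : (n - k + d <= #|S|)%N := spans_card (proj1 (sat_iff _ _) sW).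
  set y := x *m H.
  have Vy : V *m y^T = 0 by apply/kerP; exists x.
  set T := ~: S.
  have cT : (#|T| <= k - d)%N.
    have := cardsC S; rewrite card_ord -/T => e; lia.
  pose A' (i : 'I_2) := if i == ord0 then T else set0.
  have A'0 : A' ord0 = T by [].
  have A'1 : A' ord_max = set0 by [].
  have e1 : #|A' ord_max| = 0%N by rewrite A'1 cards0.
  have fW : full_col_rank A' (generic_mx F (k - d) n).
    apply/fcr_iff => w us Hw.
    have z1 := zero_size (colrestr (generic_mx F (k - d) n) (A' ord_max)) (us ord_max) e1.
    have w0 : w = 0 by have := Hw ord_max; rewrite z1.1 addr0.
    split=> // i; case: (ord2 i) => ->; last exact z1.2.
    apply: (generic_indep (T := A' ord0)); first by rewrite A'0.
    by have := Hw ord0; rewrite w0 add0r.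
  have supp : forall j, j \notin A' ord0 -> y^T j 0 = 0.
    by move=> j; rewrite A'0 inE negbK mxE => /hx.
  have Hc : forall i : 'I_2, 0 + colrestr V (A' i) *m ((Emx F (A' i))^T *m y^T) = 0.
    move=> i; rewrite add0r; case: (ord2 i) => ->; last first.
      exact: (zero_size _ _ e1).1.
    by rewrite colrestrE -mulmxA EEt_supp.
  have [_ /(_ ord0) u0] := proj1 (fcr_iff _ _) (HV A' fW) _ _ Hc.
  have y0 : y = 0.
    apply: trmx_inj; rewrite trmx0 -(EEt_supp supp) u0 mulmx0 //.
  by apply: (proj1 (row_freeP' _) fH).
- move=> HH A fW.
  set W' := generic_mx F (k - d) n.
  have card2 : (#|A ord0| + #|A ord_max| <= k - d)%N.
    have := rank_leq_row (Gmx A W'); rewrite fW !sum2 => e; lia.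
  have disj : [disjoint A ord0 & A ord_max].
    apply/pred0P => j /=; apply/negP => /andP [j0 j1].
    have Hc : forall i : 'I_2, - (W' *m delta_mx j (0 : 'I_1)) +
        colrestr W' (A i) *m ((Emx _ (A i))^T *m delta_mx j (0 : 'I_1)) = 0.
      move=> i; rewrite colrestrE -mulmxA EEt_supp ?addNr // => l lA.
      rewrite mxE; case: (eqVneq l j) => [e|]; last by rewrite andFb.
      by move: lA; case: (ord2 i) => ->; rewrite e ?j0 ?j1.
    have [_ /(_ ord0) /matrixP /(_ (enum_rank_in j0 j) 0)] :=
      proj1 (fcr_iff _ _) fW _ _ Hc.
    rewrite EtzE enum_rankK_in // !mxE !eqxx /= => /eqP; by rewrite oner_eq0.
  apply/fcr_iff => w us Hus.
  set z := Emx F (A ord0) *m us ord0 - Emx F (A ord_max) *m us ord_max.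
  have Vz : V *m z = 0.
    rewrite mulmxBr !mulmxA -!colrestrE.
    have h0 := Hus ord0; have h1 := Hus ord_max.
    have -> : colrestr V (A ord0) *m us ord0 = - w by apply/eqP; rewrite -addr_eq0 addrC h0.
    have -> : colrestr V (A ord_max) *m us ord_max = - w by apply/eqP; rewrite -addr_eq0 addrC h1.
    by rewrite subrr.
  have [x zx] : exists x : 'rV_(n - k), z^T = x *m H by apply/kerP; rewrite trmxK.
  set S := ~: (A ord0 :|: A ord_max).
  have cS : (n - k + d <= #|S|)%N.
    have := cardsC (A ord0 :|: A ord_max); rewrite card_ord -/S cardsU => e; lia.
  pose A'' (i : 'I_2) := S.
  have sW : saturated A'' (generic_mx F (n - k + d) n).
    by apply/sat_iff; apply: generic_spans; rewrite /A'' setUid.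
  have x0 : x = 0.
    apply: (proj1 (sat_iff _ _) (HH A'' sW)) => j; rewrite /A'' setUid inE inE negb_or.
    move=> /andP [j0 j1]; rewrite -zx mxE /z mxE (EuzE (us ord0) j0) mxE (EuzE (us ord_max) j1) oppr0 addr0 //.
  have z0 : z = 0 by apply: trmx_inj; rewrite zx x0 mul0mx trmx0.
  have u0 : us ord0 = 0.
    have := congr1 (fun M => (Emx F (A ord0))^T *m M) z0.
    by rewrite /= mulmxBr !mulmxA EtE EtE_disj // mul1mx mul0mx subr0 mulmx0.
  have u1 : us ord_max = 0.
    have := congr1 (fun M => (Emx F (A ord_max))^T *m M) z0.
    rewrite /= mulmxBr !mulmxA EtE EtE_disj 1?disjoint_sym // mul1mx mul0mx sub0r mulmx0.
    by move/eqP; rewrite oppr_eq0 => /eqP.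
  have w0 : w = 0 by have := Hus ord0; rewrite u0 mulmx0 addr0.
  by split=> // i; case: (ord2 i) => ->.
Qed.

Local Close Scope ring_scope.

Theorem proposition3p6 (F : fieldType) (n k d : nat)
  (V : 'M[F]_(k, n)) (H : 'M[F]_(n - k, n)) :
  row_free V -> row_free H -> (H == kermx V^T)%MS -> (d <= k)%N ->
  (rMDS_sub d 2 V <-> rMDS_sup d 2 H).
Proof. exact: main_aux. Qed.
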